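(* Let $\mathrm{char}(K)=0$ and $k\ge2$ an integer. Then $\frac{d}{dx}\big(\mathrm{Exp}_k(x)\big)=\mathrm{Exp}_k(x)$; equivalently, writing $\mathrm{Exp}_k(x)=\sum_n f_n$ with $f_n$ homogeneous of degree $n$, one has $\frac{d}{dx}f_n=f_{n-1}$ for all $n\ge1$.
   Context: Let $K$ be a field and let $x\neq y$ be two symbols. A finite planar reduced rooted tree is a finite rooted tree in which the children of each vertex are linearly ordered and no vertex has exactly one child; its leaves are the vertices without children. $P(x,y)$ is the set of isomorphism classes of pairs $S=(T,\lambda)$, $T$ a finite planar reduced rooted tree, $\lambda:L(T)\to\{x,y\}$ a labeling of its leaves; $\deg_x(S)=\#\lambda^{-1}(x)$, $\deg(S)=\#L(T)$. $P'(x,y)=P(x,y)\cup\{1_P\}$ with $1_P$ the empty tree (degree $0$). For $m\ge2$, $\bullet_m(S_1,\dots,S_m)$ is the tree with a new root whose ordered children are the roots of $S_1,\dots,S_m$, labelings inherited; on $P'(x,y)$ occurrences of $1_P$ are deleted, with $\bullet_1(S)=S$, $\bullet_0()=1_P$. $K\{\{x,y\}$: all $f=\sum_{S\in P'(x,y)}c_S(f)S$ such that for each $n$ only finitely many $S$ with $\deg_x(S)=n$ have $c_S(f)\ne0$; products $f_1\cdot\ldots\cdot f_m=\bullet_m(f_1,\dots,f_m)$ with $c_S(f_1\cdot\ldots\cdot f_m)=\sum_{\bullet_m(S_1,\dots,S_m)=S}c_{S_1}(f_1)\cdots c_{S_m}(f_m)$; $x$-adic topology from $\mathrm{ord}_x(f)=\min\{\deg_x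 S:c_S(f)\ne0\}$. $K\{\{x\}\}$: series supported on $1_P$ and trees with all leaves labeled $x$. For $g,h\in K\{\{x,y\}$ with $\mathrm{ord}_x(g)\ge1$, $\varphi_{(g,h)}$ denotes the unique $x$-adically continuous $K$-linear map preserving $1_P$ and all $\bullet_m$ with $x\mapsto g$, $y\mapsto h$. The universal derivation $d:K\{\{x\}\}\to K\{\{x,y\}$ is the continuous $K$-linear map with $d(1_P)=0$ and, for a tree $S=(T,\lambda)$ with all leaves $l_1,\dots,l_m$ labeled $x$, $d(S)=\sum_{i=1}^m(T,\lambda^{(i)})$ with $\lambda^{(i)}$ labeling $l_i$ by $y$ and the other leaves by $x$. The derivative $\frac{d}{dx}:K\{\{x\}\}\to K\{\{x\}\}$ is $\psi\circ d$, where $\psi=\varphi_{(x,1_P)}$ (so $x\mapsto x$, $y\mapsto 1$); concretely, $\frac{d}{dx}S$ for a tree $S$ with $m$ leaves is the sum over its leaves of the tree obtained by deleting that leaf (via $\bullet$ with $1_P$ in that position). For $\mathrm{char}K=0$ and an integer $k\ge2$, the $k$-ary planar exponential series $\mathrm{Exp}_k(x)=\sum_{n\ge0}f_n\in K\{\{x\}\}$ ($f_n$ homogeneous of degree $n$, i.e. supported on trees with $n$ leaves) is the unique series with $f_0=1_P$, $f_1=x$ satisfying $k^nf_n=\sum_{i_1+\dots+i_k=n}f_{i_1}\cdot f_{i_2}\cdot\ldots\cdot f_{i_k}$ ($k$-ary products) for all $n$, i.e. $f(kx)=\bullet_k(f,\dots,f)$. *)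

(* Defs.v *)
From HB Require Import structures.
From mathcomp Require Import all_boot all_order all_algebra.
Set Implicit Arguments. Unset Strict Implicit. Unset Printing Implicit Defensive.
Import GRing.Theory.
Local Open Scope ring_scope.

(* Planar rooted trees whose leaves are all labeled x, together with the
   empty tree 1_P.  [PNode l] is a new root whose ordered children are l. *)
Inductive ptree := PEmpty | PLeaf | PNode of seq ptree.

Fixpoint ptree_enc (t : ptree) : GenTree.tree unit :=
  match t with
  | PEmpty => GenTree.Node 0 [::]
  | PLeaf => GenTree.Node 1 [::]
  | PNode l => GenTree.Node 2 (map ptree_enc l)
  end.

Fixpoint ptree_dec (g : GenTree.tree unit) : option ptree :=
  match g with
  | GenTree.Leaf _ => None
  | GenTree.Node 0 _ => Some PEmpty
  | GenTree.Node 1 _ => Some PLeaf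
  | GenTree.Node _ l => Some (PNode (pmap ptree_dec l))
  end.

Lemma ptree_encK_aux : forall t : ptree, ptree_dec (ptree_enc t) = Some t.
Proof.
fix IH 1 => -[| |l] //=; congr (Some (PNode _)).
elim: l => [|c cs IHl] //=; by rewrite IH /= IHl.
Qed.

Lemma ptree_encK : pcancel ptree_enc ptree_dec.
Proof. exact: ptree_encK_aux. Qed.

HB.instance Definition _ := Countable.copy ptree (pcan_type ptree_encK).

(* Number of leaves (= deg = deg_x, all leaves being labeled x). *)
Fixpoint nleaves (t : ptree) : nat :=
  match t with
  | PEmpty => 0
  | PLeaf => 1
  | PNode l => sumn (map nleaves l)
  end.

(* Nonempty finite planar reduced rooted tree: no vertex has exactly one
   child (and, in our encoding, no internal vertex has zero children). *)
Fixpoint reduced_ne (t : ptree) : bool :=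
  match t with
  | PEmpty => false
  | PLeaf => true
  | PNode l => (2 <= size l)%N && all reduced_ne l
  end.

(* Elements of P'(x) = P(x) ∪ {1_P}. *)
Definition valid (t : ptree) : bool := (t == PEmpty) || reduced_ne t.

(* The grafting operation •_m on P'(x): occurrences of 1_P are deleted,
   •_1(S) = S, •_0() = 1_P. *)
Definition bullet (l : seq ptree) : ptree :=
  match filter (fun t => t != PEmpty) l with
  | [::] => PEmpty
  | [:: t] => t
  | l' => PNode l'
  end.

(* Series in K{{x}}: a coefficient for each tree (only the values on valid
   trees are meaningful).  Since there are finitely many trees with n leaves,
   every such function satisfies the finiteness condition. *)
Definition series (K : fieldType) := ptree -> K.

(* coefF fs ts = sum over all tuples (S_1,...,S_m) (m = size fs) in which
   each S_i is either 1_P or the next tree of ts, in order, all trees of ts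
   being used, of the product c_{S_1}(f_1)...c_{S_m}(f_m). *)
Fixpoint coefF (K : fieldType) (fs : seq (series K)) (ts : seq ptree) : K :=
  match fs with
  | [::] => if ts is [::] then 1 else 0
  | f :: fs' =>
      f PEmpty * coefF fs' ts +
      (if ts is t :: ts' then f t * coefF fs' ts' else 0)
  end.

(* Coefficient of a valid tree S in the product f_1 · ... · f_m = •_m(f_1,...,f_m):
   c_S = sum over (S_1,...,S_m) with •_m(S_1,...,S_m) = S of the product of
   the c_{S_i}(f_i).  For S = PNode l (l of size >= 2), •_m(S_1..S_m) = S iff
   the list of non-1_P entries is [:: S] or is l. *)
Definition prodc (K : fieldType) (fs : seq (series K)) (S : ptree) : K :=
  match S with
  | PEmpty => coefF fs [::]
  | PLeaf => coefF fs [:: PLeaf]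
  | PNode l => coefF fs [:: S] + coefF fs l
  end.

(* k-ary planar exponential: f_0 = 1_P, f_1 = x and f(kx) = •_k(f,...,f),
   i.e. k^n f_n = sum_{i_1+..+i_k = n} f_{i_1} ... f_{i_k} for all n. *)
Definition IsExp (K : fieldType) (k : nat) (f : series K) : Prop :=
  [/\ f PEmpty = 1, f PLeaf = 1 &
      forall S, valid S -> (k%:R) ^+ (nleaves S) * f S = prodc (nseq k f) S].

(* Deletion of the i-th leaf (left to right, 0-based) of a tree: the leaf
   is replaced by 1_P and the parent is rebuilt with •. *)
Fixpoint del (t : ptree) (i : nat) : ptree :=
  match t with
  | PEmpty => PEmpty
  | PLeaf => PEmpty
  | PNode l =>
      bullet ((fix dl (l : seq ptree) (i : nat) : seq ptree :=
                 match l with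
                 | [::] => [::]
                 | c :: cs => if (i < nleaves c)%N then del c i :: cs
                              else c :: dl cs (i - nleaves c)%N
                 end) l i)
  end.

(* g = d/dx f, where d/dx S = sum over the leaves of S of the tree obtained by
   deleting that leaf.  The coefficient of T in d/dx f is the (finite) sum of
   c_S(f) over pairs (S, leaf of S) whose deletion gives T; such S have
   nleaves T + 1 leaves, so the sum may be computed along any duplicate-free
   list L containing all valid trees with nleaves T + 1 leaves. *)
Definition is_ddx (K : fieldType) (f g : series K) : Prop :=
  forall T, valid T ->
  forall L : seq ptree, uniq L ->
    (forall S, valid S -> nleaves S = (nleaves T).+1 -> S \in L) ->
    g T = \sum_(S <- L | valid S) \sum_(i < nleaves S)
            (if del S i == T then f S else 0).

(* Main.v *)
Require Import Defs.
From mathcomp Require Import all_boot all_order all_algebra zify ring.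
Set Implicit Arguments. Unset Strict Implicit. Unset Printing Implicit Defensive.

Fixpoint allP_ (P : ptree -> Prop) (l : seq ptree) : Prop :=
  match l with [::] => True | c :: cs => P c /\ allP_ P cs end.

Lemma allP_mem (P : ptree -> Prop) l : allP_ P l -> forall c, c \in l -> P c.
Proof.
elim: l => [|d ds IH] //= [Hd Hds] c; rewrite inE => /orP[/eqP -> //|]; exact: IH.
Qed.

Lemma ptree_ind2 (P : ptree -> Prop) : P PEmpty -> P PLeaf ->
  (forall l, (forall c, c \in l -> P c) -> P (PNode l)) -> forall t, P t.
Proof.
move=> H0 H1 HN.
refine (fix F t := match t return P t with PEmpty => H0 | PLeaf => H1
  | PNode l => HN l (allP_mem ((fix G (l : seq ptree) : allP_ P l :=
       match l return allP_ P l with [::] => I | c :: cs => conj (F c) (G cs) end) l)) end).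
Qed.

Fixpoint dl (l : seq ptree) (i : nat) : seq ptree :=
  match l with
  | [::] => [::]
  | c :: cs => if (i < nleaves c)%N then del c i :: cs
               else c :: dl cs (i - nleaves c)%N
  end.

Lemma del_node l i : del (PNode l) i = bullet (dl l i).
Proof. by []. Qed.

Definition off (l : seq ptree) := sumn (map nleaves l).

Lemma dl_cat pre x post i : (i < nleaves x)%N ->
  dl (pre ++ x :: post) (off pre + i) = pre ++ del x i :: post.
Proof.
move=> Hi; elim: pre => [|c cs IH] /=; first by rewrite Hi.
rewrite /off /= -addnA ltnNge leq_addr /= addKn; by rewrite -IH.
Qed.

Lemma decomp l i : (i < off l)%N ->
  exists pre x post i', [/\ l = pre ++ x :: post, i = off pre + i' & (i' < nleaves x)%N].
Proof.
elim: l i => [|c cs IH] i //=; rewrite /off /=.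
case: (ltnP i (nleaves c)) => Hic Hi.
  by exists [::], c, cs, i.
have /IH [pre [x [post [i' [E1 E2 E3]]]]] : (i - nleaves c < off cs)%N.
  by rewrite ltn_subLR.
exists (c :: pre), x, post, i'; split => //; first by rewrite E1.
by rewrite /off /= -addnA -E2 subnKC.
Qed.

Lemma red_pos t : reduced_ne t -> (0 < nleaves t)%N.
Proof.
elim/ptree_ind2: t => // l IH /= /andP[Hs Ha].
case: l Hs Ha IH => // c cs _ /= /andP[Hc _] IH.
by rewrite addn_gt0 IH ?mem_head.
Qed.

Lemma red_ne t : reduced_ne t -> t != PEmpty.
Proof. by case: t. Qed.

Lemma bullet_all l : all reduced_ne l -> bullet l =
  match l with [::] => PEmpty | [:: t] => t | _ => PNode l end.
Proof.
move=> Ha; rewrite /bullet (all_filterP _) //.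
  by case: l {Ha} => [|? [|? ?]].
by elim: l Ha => //= c cs IH /andP[Hc Hcs]; rewrite red_ne // IH.
Qed.

Lemma bullet_red l : all reduced_ne l -> (0 < size l)%N ->
  reduced_ne (bullet l) /\ nleaves (bullet l) = off l.
Proof.
move=> Ha Hs; rewrite bullet_all //.
case: l Ha Hs => [|a [|b l]] //=.
by rewrite andbT /off /= addn0 => ->.
Qed.

Lemma filter_E pre post : all reduced_ne pre -> all reduced_ne post ->
  bullet (pre ++ PEmpty :: post) = bullet (pre ++ post).
Proof.
move=> H1 H2; rewrite /bullet !filter_cat /=.
by [].
Qed.

Lemma off_cat a b : off (a ++ b) = off a + off b.
Proof. by rewrite /off map_cat sumn_cat. Qed.

Lemma off_cons a b : off (a :: b) = nleaves a + off b.
Proof. by []. Qed.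

Lemma del_prop S i : reduced_ne S -> (i < nleaves S)%N ->
  nleaves (del S i) = (nleaves S).-1 /\
  (if S is PLeaf then del S i = PEmpty else reduced_ne (del S i)).
Proof.
elim/ptree_ind2: S i => [i //|i _|l IH i]; first by case: i.
move=> Hr Hi; have /andP[Hs Ha] : (1 < size l)%N && all reduced_ne l := Hr.
have [pre [x [post [i' [E1 E2 E3]]]]] := decomp Hi.
subst l i; rewrite del_node dl_cat //.
move: Ha; rewrite all_cat /= => /and3P[Hpre Hx Hpost].
have Hxm : x \in pre ++ x :: post by rewrite mem_cat mem_head orbT.
have [IH1 IH2] := IH x Hxm i' Hx E3.
clear IH Hxm Hr Hi.
case: x Hx E3 IH1 IH2 Hs => [//| |lx] Hx E3 IH1 IH2 Hs.
  rewrite IH2 filter_E //.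
  have [] := @bullet_red (pre ++ post).
  - by rewrite all_cat Hpre.
  - by move: Hs; rewrite !size_cat /= addnS ltnS.
  move=> -> ->; split => //.
  by rewrite -/(off _) !off_cat off_cons /= addnA addn1.
have [] := @bullet_red (pre ++ del (PNode lx) i' :: post).
- by rewrite all_cat Hpre /= IH2.
- by rewrite size_cat /= addnS.
move=> -> ->; split => //.
rewrite -/(off _) !off_cat !off_cons IH1.
have := red_pos Hx; case: (nleaves (PNode lx)) => // p _.
by rewrite addnS.
Qed.

Fixpoint ins (t : ptree) : seq (ptree * nat) :=
  match t with
  | PEmpty => [:: (PLeaf, 0%N)]
  | PLeaf => [:: (PNode [:: PLeaf; PLeaf], 0%N); (PNode [:: PLeaf; PLeaf], 1%N)]
  | PNode l =>
    [:: (PNode [:: PLeaf; PNode l], 0%N); (PNode [:: PNode l; PLeaf], off l)]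
    ++ [seq (PNode (take p l ++ PLeaf :: drop p l), off (take p l)) | p <- iota 0 (size l).+1]
    ++ flatten [seq [seq (PNode (take j l ++ x.1 :: drop j.+1 l), off (take j l) + x.2)%N
                     | x <- nth [::] (map ins l) j] | j <- iota 0 (size l)]
  end.

Lemma ins_node l : ins (PNode l) =
    [:: (PNode [:: PLeaf; PNode l], 0%N); (PNode [:: PNode l; PLeaf], off l)]
    ++ [seq (PNode (take p l ++ PLeaf :: drop p l), off (take p l)) | p <- iota 0 (size l).+1]
    ++ flatten [seq [seq (PNode (take j l ++ x.1 :: drop j.+1 l), off (take j l) + x.2)%N
                     | x <- nth [::] (map ins l) j] | j <- iota 0 (size l)].
Proof. by []. Qed.

Lemma bullet_big l : all reduced_ne l -> (1 < size l)%N -> bullet l = PNode l.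
Proof. by move=> Ha; rewrite bullet_all //; case: l {Ha} => [|? [|? ?]]. Qed.

Lemma split_nth l j : (j < size l)%N -> l = take j l ++ nth PEmpty l j :: drop j.+1 l.
Proof. by move=> Hj; rewrite -drop_nth // cat_take_drop. Qed.

Lemma valid_red t : reduced_ne t -> valid t.
Proof. by rewrite /valid => ->; rewrite orbT. Qed.

Lemma del_root1 T : reduced_ne T -> del (PNode [:: PLeaf; T]) 0 = T.
Proof.
move=> HT; rewrite del_node (_ : dl _ _ = [::] ++ PEmpty :: [:: T]) // filter_E //=.
  by rewrite bullet_all //= HT.
by rewrite HT.
Qed.

Lemma del_root2 T : reduced_ne T -> del (PNode [:: T; PLeaf]) (nleaves T) = T.
Proof.
move=> HT; rewrite del_node (_ : nleaves T = off [:: T] + 0); last by rewrite /off /= !addn0.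
rewrite (dl_cat [:: T] [::] (i := 0)) //.
rewrite filter_E //=; first by rewrite bullet_all //= HT.
by rewrite HT.
Qed.

Lemma ins_sound T x : valid T -> x \in ins T ->
  [/\ reduced_ne x.1, (x.2 < nleaves x.1)%N & del x.1 x.2 = T].
Proof.
elim/ptree_ind2: T x => [x _|x _|l IH x].
- by rewrite inE => /eqP ->.
- by rewrite !inE => /orP[] /eqP ->.
move=> HT; have /andP[Hs Ha] : (1 < size l)%N && all reduced_ne l by case/orP: HT.
rewrite ins_node !mem_cat; case/or3P; [rewrite !in_cons in_nil orbF => /orP[] /eqP-> | move/mapP => [p Hp ->] | move/flatten_mapP => [j Hj]].
- split; [by rewrite /= Hs Ha | by [] | exact: del_root1].
- split; [by rewrite /= Hs Ha | | exact: del_root2].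
  by rewrite /= /off /= addn0 addn1 ltnS leqnn.
- rewrite mem_iota add0n ltnS in Hp.
  have Hall : all reduced_ne (take p l) && all reduced_ne (drop p l)
    by rewrite -all_cat cat_take_drop.
  case/andP: Hall => Ht Hd.
  split; cbn [fst snd].
  + by rewrite /= all_cat /= Ht Hd size_cat /= addnS -size_cat cat_take_drop ltnS ltnW.
  + rewrite /= -/(off _) off_cat off_cons /=; lia.
  rewrite del_node -[off (take p l)]addn0 dl_cat //= filter_E // cat_take_drop.
  exact: bullet_big.
rewrite mem_iota add0n in Hj; move=> /mapP[y Hy ->].
rewrite (nth_map PEmpty) // in Hy.
set c := nth PEmpty l j in Hy.
have Hl := split_nth Hj; rewrite -/c in Hl.
have Hc : reduced_ne c by apply: (allP Ha); rewrite mem_nth.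
have [Hy1 Hy2 Hy3] := IH c (mem_nth _ Hj) y (valid_red Hc) Hy.
have Hall : all reduced_ne (take j l) && all reduced_ne (drop j.+1 l).
  by move: Ha; rewrite {1}Hl all_cat /= => /and3P[-> _ ->].
case/andP: Hall => Ht Hd.
split; cbn [fst snd].
- rewrite /= all_cat /= Ht Hd Hy1 /= andbT.
  by move: Hs; rewrite {1}Hl !size_cat.
- rewrite /= -/(off _) off_cat off_cons.
  by rewrite ltn_add2l ltn_addr.
rewrite del_node dl_cat // Hy3 -Hl; exact: bullet_big.
Qed.

Lemma take_drop_mid pre (y : ptree) post :
  take (size pre) (pre ++ y :: post) = pre /\ drop (size pre).+1 (pre ++ y :: post) = post.
Proof.
split; first by rewrite take_size_cat.
by rewrite drop_cat ltnNge leqnSn /= subSnn /= drop0.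
Qed.

Lemma ins_complete S i : reduced_ne S -> (i < nleaves S)%N -> (S, i) \in ins (del S i).
Proof.
elim/ptree_ind2: S i => [//|i _|lS IH i]; first by case: i => // _; rewrite mem_head.
move=> Hr Hi; have /andP[Hs Ha] : (1 < size lS)%N && all reduced_ne lS := Hr.
have [pre [x [post [i' [E1 E2 E3]]]]] := decomp Hi.
have Hxm : x \in lS by rewrite E1 mem_cat mem_head orbT.
have := IH x Hxm i'.
move: Ha Hs; rewrite E1 E2 all_cat => /andP[Hpre /andP[Hx Hpost]] Hs IHx.
clear IH Hxm Hr Hi E1 E2.
rewrite del_node dl_cat //.
case: x Hx E3 IHx Hs => [//| |lx] Hx E3 IHx Hs.
-
  have E0 : i' = 0%N by move: E3; rewrite /= ltnS leqn0 => /eqP.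
  subst i'.
  rewrite filter_E // addn0.
  case E: (pre ++ post) => [|T [|T2 rest]].
  + by move: Hs; rewrite size_cat /= addnS -size_cat E.
  + have HT : reduced_ne T.
      have : all reduced_ne (pre ++ post) by rewrite all_cat Hpre; exact: Hpost.
      by rewrite E /= andbT.
    rewrite bullet_all /=; last by rewrite HT.
    case: pre E Hpre {Hs} => [|a [|b pre']] //=.
    * move=> -> _.
      case: T HT => [//| |lt] HT; first by rewrite mem_head.
      by rewrite ins_node mem_cat mem_head.
    * case=> -> Ep _; subst post.
      case: T HT => [//| |lt] HT.
        by rewrite /off /= !inE eqxx orbT.
      rewrite ins_node mem_cat; apply/orP; left.
      by rewrite /off /= !addn0 !inE eqxx orbT.
  + rewrite -E bullet_big; last by rewrite E.
      rewrite ins_node mem_cat; apply/orP; right; rewrite mem_cat; apply/orP; left.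
      apply/mapP; exists (size pre).
        by rewrite mem_iota add0n ltnS size_cat leq_addr.
      by rewrite take_size_cat // drop_size_cat.
    by rewrite all_cat Hpre.
have [_ Hy] := del_prop Hx E3.
set y := del (PNode lx) i' in Hy IHx *.
rewrite bullet_big; last first.
  by move: Hs; rewrite !size_cat.
  by rewrite all_cat Hpre /= Hy.
rewrite ins_node mem_cat; apply/orP; right; rewrite mem_cat; apply/orP; right.
apply/flatten_mapP; exists (size pre).
  by rewrite mem_iota add0n size_cat /= addnS ltnS leq_addr.
rewrite (nth_map PEmpty); last by rewrite size_cat /= addnS ltnS leq_addr.
rewrite nth_cat ltnn subnn /=.
apply/mapP; exists (PNode lx, i'); first exact: IHx.
have [-> ->] := take_drop_mid pre y post.
by [].
Qed.

Fixpoint loc (l : seq ptree) (i : nat) : nat * nat :=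
  match l with
  | [::] => (0%N, i)
  | c :: cs => if (i < nleaves c)%N then (0%N, i)
               else let p := loc cs (i - nleaves c) in (p.1.+1, p.2)
  end.

Lemma loc_cat pre x post i : (i < nleaves x)%N ->
  loc (pre ++ x :: post) (off pre + i) = (size pre, i).
Proof.
move=> Hi; elim: pre => [|c cs IH] /=; first by rewrite Hi.
by rewrite /off /= -addnA ltnNge leq_addr /= addKn -/(off _) IH.
Qed.

Definition dec (x : ptree * nat) : nat * nat * ptree * nat :=
  match x.1 with
  | PNode l => let p := loc l x.2 in (size l, p.1, nth PEmpty l p.1, p.2)
  | _ => (0%N, 0%N, PEmpty, 0%N)
  end.

Lemma dec_node pre x post i : (i < nleaves x)%N ->
  dec (PNode (pre ++ x :: post), off pre + i) = (size (pre ++ x :: post), size pre, x, i).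
Proof. by move=> Hi; rewrite /dec /= loc_cat // nth_cat ltnn subnn. Qed.

Lemma uniq_flatten_key (A B : eqType) (k : B -> A) (F : A -> seq B) s :
  uniq s -> (forall j, j \in s -> uniq (F j)) ->
  (forall j z, j \in s -> z \in F j -> k z = j) -> uniq (flatten (map F s)).
Proof.
elim: s => [|a s IH] //= /andP[Has Hs] HF Hk.
rewrite cat_uniq HF ?mem_head //= IH //; last first.
- by move=> j z Hj; apply: Hk; rewrite inE Hj orbT.
- by move=> j Hj; apply: HF; rewrite inE Hj orbT.
rewrite andbT; apply/hasPn => z /flatten_mapP[j Hj Hz]; apply/negP => Hza.
have E1 := Hk a z (mem_head _ _) Hza.
have E2 : k z = j by apply: Hk => //; rewrite inE Hj orbT.
by move: Has; rewrite -E1 E2 Hj.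
Qed.

Lemma disj (T : eqType) (P : pred T) (s1 s2 : seq T) :
  (forall z, z \in s1 -> P z) -> (forall z, z \in s2 -> ~~ P z) -> ~~ has (mem s1) s2.
Proof.
move=> H1 H2; apply/hasPn => z /H2 Hz; apply/negP => /H1; by rewrite (negbTE Hz).
Qed.

Lemma size_mid pre (x y : ptree) post :
  size (pre ++ x :: post) = size (pre ++ y :: post).
Proof. by rewrite !size_cat. Qed.

Lemma ins_uniq T : valid T -> uniq (ins T).
Proof.
elim/ptree_ind2: T => [//|_|l IH HT].
  by [].
have /andP[Hs Ha] : (1 < size l)%N && all reduced_ne l by case/orP: HT.
set m := size l.
have HTr : reduced_ne (PNode l) by [].
apply: (@map_uniq _ _ dec).
rewrite ins_node !map_cat.
set A := map dec _; set B := map dec _; set C := map dec _.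
have EA : A = [:: (2, 0, PLeaf, 0); (2, 1, PLeaf, 0)]%N.
  have E1 : dec (PNode [:: PLeaf; PNode l], 0%N) = (2,0,PLeaf,0)%N.
    exact (@dec_node [::] PLeaf [:: PNode l] 0 isT).
  have E2 : dec (PNode [:: PNode l; PLeaf], off l) = (2,1,PLeaf,0)%N.
    have -> : off l = (off [:: PNode l] + 0)%N by rewrite /off /= !addn0.
    exact (@dec_node [:: PNode l] PLeaf [::] 0 isT).
  by rewrite /A /= E1 E2.
have EB : B = [seq (m.+1, p, PLeaf, 0%N) | p <- iota 0 m.+1].
  rewrite /B -map_comp; apply/eq_in_map => p; rewrite mem_iota add0n ltnS => Hp /=.
  rewrite -[off (take p l)]addn0 dec_node // size_cat /= size_takel // size_drop.
  by rewrite addnS subnKC.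
have HC : forall z, z \in C -> z.1.1.1 = m /\ z.1.2 != PLeaf.
  move=> z /mapP[w /flatten_mapP[j Hj /mapP[y Hy ->]] ->].
  rewrite mem_iota add0n in Hj.
  rewrite (nth_map PEmpty) // in Hy.
  have Hc : reduced_ne (nth PEmpty l j) by apply: (allP Ha); rewrite mem_nth.
  have [Hy1 Hy2 Hy3] := ins_sound (valid_red Hc) Hy.
  rewrite dec_node // (size_mid _ _ (nth PEmpty l j)) -split_nth //; split => //=.
  by apply/negP => /eqP Ey; move: Hy3 Hc; rewrite Ey => <-.
rewrite cat_uniq [uniq (B ++ C)]cat_uniq.
apply/and3P; split; [|apply/negP => /hasP [z Hz2 Hz1]|apply/and3P; split].
- by rewrite EA.
- move: Hz2; rewrite mem_cat => /orP[|Hz2].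
  + rewrite EB => /mapP[p _ Ez]; move: Hz1; rewrite EA Ez !inE.
    move=> H; have : m.+1 = 2 by case/orP: H => /eqP [] ->.
    by case=> E; move: Hs; rewrite -/m E.
  + have [_] := HC z Hz2; move: Hz1; rewrite EA !inE.
    by case/orP => /eqP ->.
- by rewrite EB map_inj_uniq ?iota_uniq // => p q [].
- apply: (disj (P := fun z => z.1.1.1 == m.+1)).
    by move=> z; rewrite EB => /mapP[p _ ->].
  by move=> z /HC [-> _]; rewrite eqn_leq ltnn andbF.
rewrite /C map_flatten -map_comp.
apply: (uniq_flatten_key (k := fun z => z.1.1.2)); first exact: iota_uniq.
- move=> j; rewrite mem_iota add0n => Hj /=.
  have Hc0 : reduced_ne (nth PEmpty l j) by apply: (allP Ha); rewrite mem_nth.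
  rewrite (nth_map PEmpty) // -map_comp map_inj_in_uniq.
    by apply: IH; [rewrite mem_nth | exact: valid_red].
  move=> y1 y2 H1 H2 /=.
  have Hc : reduced_ne (nth PEmpty l j) by apply: (allP Ha); rewrite mem_nth.
  have [_ Hy12 _] := ins_sound (valid_red Hc) H1.
  have [_ Hy22 _] := ins_sound (valid_red Hc) H2.
  rewrite !dec_node // => -[_ E1 E2].
  by case: y1 y2 E1 E2 {H1 H2 Hy12 Hy22} => a b [c d] /= -> ->.
- move=> j z; rewrite mem_iota add0n => Hj /= /mapP[w /mapP[y Hy ->] ->].
  rewrite (nth_map PEmpty) // in Hy.
  have Hc : reduced_ne (nth PEmpty l j) by apply: (allP Ha); rewrite mem_nth.
  have [_ Hy2 _] := ins_sound (valid_red Hc) Hy.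
  rewrite dec_node //= size_take; case: ltnP => // Hj'.
  by apply/eqP; rewrite eqn_leq Hj' /= ltnW.
Qed.

Import GRing.Theory.
Local Open Scope ring_scope.

Section Alg.
Variable K : fieldType.

Lemma coefF_nseq (f : series K) k ts : f PEmpty = 1 ->
  coefF (nseq k f) ts = ('C(k, size ts))%:R * \prod_(t <- ts) f t.
Proof.
move=> H0; elim: k ts => [|k IH] [|t ts] /=.
- by rewrite big_nil mulr1.
- by rewrite mul0r.
- by rewrite H0 mul1r IH addr0 !bin0.
rewrite H0 mul1r !IH /= big_cons binS natrD; ring.
Qed.

Lemma exp_node k (f : series K) l N : IsExp k f -> reduced_ne (PNode l) -> off l = N ->
  ((k%:R) ^+ N - k%:R) * f (PNode l) = ('C(k, size l))%:R * \prod_(c <- l) f c.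
Proof.
move=> [H0 H1 H] Hr EN.
have := H (PNode l) (valid_red Hr).
rewrite (_ : nleaves (PNode l) = N) //.
rewrite /prodc !coefF_nseq // /= big_cons big_nil bin1 mulr1 => E.
by rewrite mulrBl E; apply/eqP; rewrite subr_eq addrC.
Qed.

Lemma sum_iota_const a N (c : K) : \sum_(p <- iota a N) c = c *+ N.
Proof. elim: N a => [|N IH] a; by rewrite ?big_nil //= big_cons IH mulrS. Qed.

Lemma t1 k n : (2 <= k)%N -> (1 < n)%N -> (k < k ^ n)%N.
Proof.
move=> Hk Hn.
have := ltn_exp2l 1 n Hk.
rewrite expn1 => ->.
exact Hn.
Qed.

Lemma qnz k n : [pchar K] =i pred0 -> (2 <= k)%N -> (1 < n)%N ->
  ((k%:R : K) ^+ n - k%:R) != 0.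
Proof.
move=> Hc Hk Hn.
have Hkn := @t1 k n Hk Hn.
rewrite -natrX -natrB; last exact: ltnW.
have -> := (GRing.pcharf0P K).1 Hc (k ^ n - k)%N.
by rewrite subn_eq0 -ltnNge.
Qed.

Lemma nat_id k m : (m.+1 * 'C(k, m.+1) + m * 'C(k, m) = k * 'C(k, m))%N.
Proof.
rewrite mul_bin_left -mulnDl; case: (leqP m k) => Hm; first by rewrite subnK.
by rewrite bin_small // !muln0.
Qed.

Lemma two_bin k : (1 <= k)%N -> ('C(k, 2))%:R *+ 2 = (k%:R : K) ^+ 2 - k%:R.
Proof.
move=> Hk; rewrite -mulr_natr -natrM mulnC (mul_bin_left k 1) bin1 natrM natrB //.
by rewrite expr2 mulrBl mul1r.
Qed.

Lemma off_ge l : all reduced_ne l -> (size l <= off l)%N.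
Proof.
elim: l => [|c cs IH] //= /andP[Hc Hcs].
by rewrite off_cons -add1n; apply: leq_add; [exact: red_pos | exact: IH].
Qed.

Definition ch (t : ptree) := if t is PNode l then l else [::].

Lemma ins_sum k (f : series K) T : [pchar K] =i pred0 -> (2 <= k)%N -> IsExp k f ->
  valid T -> \sum_(x <- ins T) f x.1 = f T.
Proof.
move=> Hc Hk Hf; have [H0 H1 _] := Hf.
have Hk1 : (1 <= k)%N by apply: ltnW.
elim/ptree_ind2: T => [_|_|l IH HT].
- by rewrite big_cons big_nil addr0 H0 H1.
- rewrite big_cons big_cons big_nil addr0.
  have E := @exp_node k f [:: PLeaf; PLeaf] 2 Hf isT erefl.
  apply: (mulfI (@qnz k 2 Hc Hk isT)).
  rewrite mulrDr E !big_cons big_nil H1 !mulr1 -two_bin //.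
have /andP[Hs Ha] : (1 < size l)%N && all reduced_ne l by case/orP: HT.
set n := off l; set m := size l.
have HTr : reduced_ne (PNode l) by [].
have Hn : (1 < n)%N by apply: leq_trans Hs (off_ge Ha).
have ET := @exp_node k f l n Hf HTr erefl.
apply: (mulfI (@qnz k n.+1 Hc Hk (ltnW Hn))).
set q := _ - _.
set G := fun x : ptree * nat => ('C(k, size (ch x.1)))%:R * \prod_(c <- ch x.1) f c.
have HG : q * \sum_(x <- ins (PNode l)) f x.1 = \sum_(x <- ins (PNode l)) G x.
  rewrite mulr_sumr; apply: eq_big_seq => x Hx.
  have [Hr1 Hx2 Hd] := ins_sound HT Hx.
  have [Hnl _] := del_prop Hr1 Hx2.
  have Hpos := red_pos Hr1.
  rewrite Hd in Hnl.
  have Hnx : nleaves x.1 = n.+1 by rewrite -(prednK Hpos) -Hnl.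
  rewrite /G; case: (x.1) Hr1 Hnx => [//| |l'] Hr1 Hnx.
    by move: Hnx Hn => [<-].
  exact: (@exp_node k f l' n.+1 Hf Hr1 Hnx).
rewrite HG; clear HG.
rewrite ins_node big_cat big_cat big_cons big_cons big_nil big_map big_flatten big_map.
have EA1 : G (PNode [:: PLeaf; PNode l], 0%N) = ('C(k,2))%:R * f (PNode l).
  by rewrite /G /= !big_cons big_nil H1 mul1r mulr1.
have EA2 : G (PNode [:: PNode l; PLeaf], off l) = ('C(k,2))%:R * f (PNode l).
  by rewrite /G /= !big_cons big_nil H1 !mulr1.
have EB : \sum_(j <- iota 0 m.+1) G (PNode (take j l ++ PLeaf :: drop j l), off (take j l))
    = (('C(k,m.+1))%:R * \prod_(c <- l) f c) *+ m.+1.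
  rewrite -(sum_iota_const 0); apply: eq_big_seq => p; rewrite mem_iota add0n ltnS => Hp.
  rewrite /G /= size_cat /= size_takel // size_drop addnS subnKC //.
  by rewrite big_cat big_cons H1 /= mul1r -big_cat cat_take_drop.
have EC : \sum_(j <- iota 0 m) \sum_(i <- [seq (PNode (take j l ++ x.1 :: drop j.+1 l),
                (off (take j l) + x.2)%N) | x <- nth [::] [seq ins i | i <- l] j]) G i
    = (('C(k,m))%:R * \prod_(c <- l) f c) *+ m.
  rewrite -(sum_iota_const 0); apply: eq_big_seq => j; rewrite mem_iota add0n => Hj.
  rewrite (nth_map PEmpty) // big_map.
  set c := nth PEmpty l j.
  have Hcr : reduced_ne c by apply: (allP Ha); rewrite mem_nth.
  have Hl := split_nth Hj; rewrite -/c in Hl.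
  rewrite (eq_bigr (fun y => ('C(k,m))%:R * (\prod_(c <- take j l) f c *
              (\prod_(c <- drop j.+1 l) f c)) * f y.1)); last first.
    move=> y _; rewrite /G /= (size_mid _ _ c) -Hl big_cat big_cons.
    by rewrite /= [f y.1 * _]mulrC !mulrA.
  rewrite -mulr_sumr IH //; last by rewrite valid_red.
    by rewrite [in RHS]Hl big_cat big_cons /= [f c * _]mulrC !mulrA.
  by rewrite mem_nth.
rewrite EA1 EA2 EB EC /= addr0.
have EN : (m.+1)%:R * ('C(k,m.+1))%:R + m%:R * ('C(k,m))%:R = k%:R * ('C(k,m))%:R :> K.
  by rewrite -!natrM -natrD nat_id.
rewrite -[_ *+ m.+1]mulr_natl -[_ *+ m]mulr_natl !mulrA.
rewrite -(mulrDl _ _ (\prod_(c <- l) f c)) EN -(mulrDl _ _ (f (PNode l))) -mulr2n two_bin //.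
rewrite -mulrA -ET /q [_ ^+ n.+1]exprS.
set t := k%:R ^+ n; set kk : K := k%:R; set y := f (PNode l).
rewrite ?expr1; ring.
Qed.
Lemma ddx_main k (f : series K) : [pchar K] =i pred0 -> (2 <= k)%N -> IsExp k f ->
  is_ddx f f.
Proof.
move=> Hc Hk Hf T HT L HL HLc.
rewrite -{1}(ins_sum Hc Hk Hf HT).
set Q := [seq x <- [seq (Sx, i) | Sx <- [seq Sx <- L | valid Sx], i <- iota 0 (nleaves Sx)]
            | del x.1 x.2 == T].
have HQ : perm_eq (ins T) Q.
  apply: uniq_perm; first exact: ins_uniq.
    rewrite filter_uniq // allpairs_uniq_dep //.
    - by rewrite filter_uniq.
    - by move=> Sx _; rewrite iota_uniq.
    by move=> [a1 b1] [a2 b2] _ _ /= [-> ->].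
  move=> [Sx i]; rewrite mem_filter /=; apply/idP/idP.
    move=> Hx; have [Hr Hi Hd] := ins_sound HT Hx.
    rewrite /= in Hr Hi Hd; rewrite Hd eqxx /=.
    apply/allpairsPdep; exists Sx, i; split => //; last by rewrite mem_iota.
    rewrite mem_filter valid_red // HLc ?valid_red //.
    have [Hn _] := del_prop Hr Hi; rewrite Hd in Hn.
    by rewrite Hn prednK // red_pos.
  case/andP => /eqP Hd /allpairsPdep [Sy [i' [HS Hi [E1 E2]]]]; subst Sx i.
  move: HS Hi Hd; rewrite mem_filter mem_iota add0n => /andP[HvS _] Hi <-.
  apply: ins_complete => //.
  by case/orP: HvS => // /eqP HE; move: Hi; rewrite HE.
rewrite (perm_big _ HQ) big_filter big_mkcond big_allpairs_dep /= -[in RHS]big_filter.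
apply: eq_bigr => Sx _.
rewrite (_ : iota 0 (nleaves Sx) = index_iota 0 (nleaves Sx)); last by rewrite /index_iota subn0.
by rewrite big_mkord.
Qed.
End Alg.

Fixpoint fe (K : fieldType) (k : nat) (t : ptree) : K :=
  match t with
  | PEmpty => 1
  | PLeaf => 1
  | PNode l => ('C(k, size l))%:R * \prod_(c <- map (fe K k) l) c /
               ((k%:R) ^+ (sumn (map nleaves l)) - k%:R)
  end.

Lemma fe_exp (K : fieldType) k : [pchar K] =i pred0 -> (2 <= k)%N -> IsExp k (fe K k).
Proof.
move=> Hc Hk; split => // -[_|_|l].
- by rewrite /prodc coefF_nseq //= expr0 mulr1 bin0 big_nil mulr1.
- by rewrite /prodc coefF_nseq //= expr1 mulr1 bin1 big_cons big_nil !mulr1.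
move=> Hv; have Hr : reduced_ne (PNode l) by case/orP: Hv.
have /andP[Hs Ha] := Hr.
have Hn : (1 < off l)%N by apply: leq_trans Hs (off_ge Ha).
have Hq := qnz Hc Hk Hn.
set y := fe K k (PNode l).
have Ey : ((k%:R : K) ^+ off l - k%:R) * y = ('C(k, size l))%:R * \prod_(c <- l) fe K k c.
  by rewrite /y /= big_map mulrC divfK.
rewrite /prodc !coefF_nseq // big_cons big_nil mulr1 bin1.
rewrite [k%:R * y + _]addrC; apply/eqP; rewrite -subr_eq -mulrBl.
by rewrite (_ : nleaves (PNode l) = off l) // Ey.
Qed.


Theorem proposition6p2 (K : fieldType) (k : nat) :
  [pchar K] =i pred0 -> (2 <= k)%N ->
  (exists f : series K, IsExp k f) /\
  (forall f : series K, IsExp k f -> is_ddx f f).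
Proof.
move=> Hc Hk; split; first by exists (fe K k); exact: (fe_exp Hc Hk).
by move=> f Hf; exact: (ddx_main Hc Hk Hf).
Qed.
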